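(* Let $n\ge 1$, $m,m'\ge0$, $\alpha\in\mathbb{Z}_{\ge0}^m$, $\beta\in\mathbb{Z}_{\ge0}^{m'}$. The dimension of the space of $S_n$-invariants in the homogeneous component of $\mathbb{C}[X_{n\times m};\Theta_{n\times m'}]$ of degree $\alpha$ in the commuting variables and $\beta$ in the Grassmannian variables equals the number of multiset partitions $\pi$ with content $\{\!\{1^{\alpha_1},\dots,m^{\alpha_m},\bar1^{\beta_1},\dots,\overline{m'}^{\beta_{m'}}\}\!\}$ and at most $n$ parts, such that no barred entry occurs more than once in any part, and every part containing an odd number of barred entries occurs at most once in $\pi$. (Equivalently, the $S_n$-invariants of $\mathbb{C}[X_{n\times m};\Theta_{n\times m'}]$ have a basis indexed by such super multiset partitions of length at most $n$.)
   Context: $\mathbb{C}[X_{n\times m};\Theta_{n\times m'}]$ is the associative $\mathbb{C}$-algebra generated by $x_{rk}$ ($1\le r\le n$, $1\le k\le m$) and $\theta_{ri}$ ($1\le r\le n$, $1\le i\le m'$) with: the $x_{rk}$ commute with each other and with all $\theta_{si}$; $\theta_{ri}\theta_{sj}=-\theta_{sj}\theta_{ri}$ for $(r,i)\ne(s,j)$; $\theta_{ri}^2=0$. $S_n$ acts by algebra automorphisms via $\sigma(x_{rk})=x_{\sigma(r)k}$, $\sigma(\theta_{ri})=\theta_{\sigma(r)i}$. The degree-$(\alpha,\beta)$ component is spanned by monomials of total degree $\alpha_k$ in $x_{1k},\dots,x_{nk}$ for each $k$ and $\beta_i$ in $\theta_{1i},\dots,\theta_{ni}$ for each $i$. Multisets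 are over the alphabet $\{1,\dots,m\}\cup\{\bar1,\dots,\overline{m'}\}$, entries $\bar j$ being called barred; a multiset partition of $S$ is a multiset of non-empty multisets (parts) whose multiset union is $S$. *)

(* Defs.v *)
From HB Require Import structures.
From mathcomp Require Import all_boot all_order all_algebra all_fingroup all_field.
Set Implicit Arguments. Unset Strict Implicit. Unset Printing Implicit Defensive.
Import GRing.Theory Num.Theory.
Local Open Scope ring_scope.

(* The (alpha,beta)-homogeneous component of C[X_{n x m}; Theta_{n x m'}],  *)
(* described through its monomial basis.                                     *)
(* A monomial is  x^e * theta_T  where e : I_n x I_m -> nat is the exponent  *)
(* matrix and T a subset of I_n x I_m' ; theta_T is the product of the       *)
(* theta_{ri}, (r,i) in T, taken in increasing order of the key r*m'+i.      *)
(* Exponents are bounded by D (any D >= sum alpha is enough to contain the   *)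
(* whole component).                                                         *)

Definition mon (n m m' D : nat) :=
  ({ffun 'I_n * 'I_m -> 'I_D.+1} * {set 'I_n * 'I_m'})%type.

Definition Dbound (m : nat) (alpha : 'I_m -> nat) : nat := (\sum_(k < m) alpha k)%N.

Definition key (n m' : nat) (p : 'I_n * 'I_m') : nat := (p.1 * m' + p.2)%N.

Definition is_deg (n m m' D : nat) (alpha : 'I_m -> nat) (beta : 'I_m' -> nat)
  (mu : mon n m m' D) : bool :=
  [forall k : 'I_m, (\sum_(r < n) (mu.1 (r, k) : nat))%N == alpha k] &&
  [forall i : 'I_m', #|[set r : 'I_n | (r, i) \in mu.2]| == beta i].

(* sigma(x^e theta_T) = sign * x^(e o sigma^-1) theta_(sigma T) *)
Definition mon_act (n m m' D : nat) (s : 'S_n) (mu : mon n m m' D) : mon n m m' D :=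
  ([ffun p : 'I_n * 'I_m => mu.1 ((s^-1)%g p.1, p.2)],
   [set (s p.1, p.2) | p in mu.2]).

(* sign of reordering theta_{s r1 i1} ... theta_{s rk ik} into increasing order *)
Definition theta_sign (n m' : nat) (s : 'S_n) (T : {set 'I_n * 'I_m'}) : algC :=
  (-1) ^+ #|[set pq : ('I_n * 'I_m') * ('I_n * 'I_m') |
             [&& pq.1 \in T, pq.2 \in T, (key pq.1 < key pq.2)%N &
                 (key (s pq.2.1, pq.2.2) < key (s pq.1.1, pq.1.2))%N]]|.

(* matrix of the action of s on the span of all monomials in mon (row vectors) *)
Definition act_mx (n m m' D : nat) (s : 'S_n) : 'M[algC]_#|{: mon n m m' D}| :=
  \matrix_(i, j)
    (if enum_val j == mon_act s (enum_val i) then theta_sign s (enum_val i).2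
     else 0).

(* row space = the (alpha,beta) homogeneous component *)
Definition deg_mx (n m m' : nat) (alpha : 'I_m -> nat) (beta : 'I_m' -> nat)
  : 'M[algC]_#|{: mon n m m' (Dbound alpha)}| :=
  \matrix_(i, j) ((i == j) && is_deg alpha beta (enum_val i))%:R.

Definition inv_dim (n m m' : nat) (alpha : 'I_m -> nat) (beta : 'I_m' -> nat) : nat :=
  \rank (deg_mx n alpha beta
         :&: \bigcap_(s : 'S_n) kermx (act_mx m m' (Dbound alpha) s - 1%:M))%MS.

(* Alphabet: inl k = unbarred letter k, inr i = barred letter bar i.        *)
(* A multiset over the alphabet = multiplicity function; a multiset of parts *)
(* = multiplicity function on parts.  Multiplicities are bounded by the      *)
(* total size tot (harmless: every relevant multiplicity is <= tot).         *)

Definition letter (m m' : nat) := ('I_m + 'I_m')%type.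

Definition tot (m m' : nat) (alpha : 'I_m -> nat) (beta : 'I_m' -> nat) : nat :=
  (\sum_(k < m) alpha k + \sum_(i < m') beta i)%N.

Definition part (m m' t : nat) := {ffun letter m m' -> 'I_t.+1}.

Definition content (m m' : nat) (alpha : 'I_m -> nat) (beta : 'I_m' -> nat)
  (a : letter m m') : nat :=
  match a with inl k => alpha k | inr i => beta i end.

Definition nbarred (m m' t : nat) (p : part m m' t) : nat :=
  (\sum_(i < m') (p (inr i) : nat))%N.

Definition is_super_msp (n m m' : nat) (alpha : 'I_m -> nat) (beta : 'I_m' -> nat)
  (P : {ffun part m m' (tot alpha beta) -> 'I_(tot alpha beta).+1}) : bool :=
  [&&
      [forall p, (P p > 0)%N ==> [exists a, (p a > 0)%N]],
      [forall a, (\sum_p (P p : nat) * (p a : nat))%N == content alpha beta a],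
      ((\sum_p (P p : nat))%N <= n)%N,
      [forall p, (P p > 0)%N ==> [forall i : 'I_m', (p (inr i) <= 1)%N]] &
      [forall p, odd (nbarred p) ==> ((P p : nat) <= 1)%N]].

Definition num_super_msp (n m m' : nat) (alpha : 'I_m -> nat) (beta : 'I_m' -> nat)
  : nat := #|[pred P | @is_super_msp n m m' alpha beta P]|.

(* Main.v *)
Require Import Defs.
From mathcomp Require Import all_boot all_order all_algebra all_fingroup all_field.
From mathcomp Require Import zify.
Set Implicit Arguments. Unset Strict Implicit. Unset Printing Implicit Defensive.
Import GRing.Theory Num.Theory.

Lemma card_nat (X : finType) (P : pred X) :
  #|[set x | P x]| = (\sum_x (P x : nat))%N.
Proof.
rewrite -sum1_card big_mkcond /=; apply: eq_bigr => x _; rewrite inE; by case: (P x).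
Qed.

Lemma invol_odd (X : finType) (f : X -> X) (A : {set X}) :
  {in A, forall x, f x \in A} -> {in A, forall x, f (f x) = x} ->
  odd #|A| = odd #|[set x in A | f x == x]|.
Proof.
have [N] := ubnP #|A|; elim: N A => // N IH A ltA fA invA.
case: (set_0Vmem A) => [->|[x xA]].
  have -> : [set y in set0 | f y == y] = set0 :> {set X} by apply/setP=> y; rewrite !inE.
  by rewrite !cards0.
case: (eqVneq (f x) x) => fx.
  have Hc : #|A| = (#|A :\ x|).+1 by rewrite (cardsD1 x A) xA.
  have Hf : #|[set y in A | f y == y]| = (#|[set y in A :\ x | f y == y]|).+1.
    rewrite (cardsD1 x [set y in A | f y == y]) !inE xA fx eqxx /=; congr S.
    by apply: eq_card => y; rewrite !inE; case: (y == x).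
  rewrite Hc Hf /= IH //.
  - by rewrite -ltnS -Hc.
  - move=> y; rewrite !inE => /andP[yx yA]; rewrite fA // andbT.
    by apply/eqP => fyx; move: yx; rewrite -(invA y yA) fyx fx eqxx.
  - by move=> y; rewrite !inE => /andP[_ yA]; apply: invA.
have fxA := fA x xA.
have Hc : #|A| = (#|(A :\ x) :\ f x|).+2.
  by rewrite (cardsD1 x A) xA (cardsD1 (f x) (A :\ x)) !inE fx fxA.
have Hf : [set y in A | f y == y] = [set y in (A :\ x) :\ f x | f y == y].
  apply/setP => y; rewrite !inE; case: (eqVneq y x) => [->|yx]; first by rewrite (negbTE fx) !andbF.
  case: (eqVneq y (f x)) => [->|yfx] /=; last by [].
  by rewrite invA // eq_sym (negbTE fx) !andbF.
rewrite Hc Hf /= IH ?negbK //.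
- by move: ltA; rewrite Hc; lia.
- move=> y; rewrite !inE => /and3P[yfx yx yA]; rewrite fA // andbT.
  apply/andP; split.
    by apply/eqP => H; move: yx; rewrite -(invA y yA) H invA // eqxx.
  by apply/eqP => H; move: yfx; rewrite -(invA y yA) H eqxx.
- by move=> y; rewrite !inE => /and3P[_ _ yA]; apply: invA.
Qed.

Section Cocycle.
Variables (X : finType) (lt : rel X).
Hypothesis ltirr : forall x, lt x x = false.
Hypothesis lttot : forall x y, x != y -> lt y x = ~~ lt x y.

Definition invc (g : X -> X) (T : {set X}) :=
  #|[set pq : X * X | [&& pq.1 \in T, pq.2 \in T, lt pq.1 pq.2 & lt (g pq.2) (g pq.1)]]|.

Lemma invc_cocycle g h T : injective g -> injective h ->
  odd (invc g T + invc h (g @: T)) = odd (invc (h \o g) T).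
Proof.
move=> ginj hinj; rewrite /invc !card_nat.
have Ginj : injective (fun pq : X * X => (g pq.1, g pq.2)).
  by move=> [a b] [c d] /= [/ginj -> /ginj ->].
rewrite [X in _ + X](reindex_inj Ginj) /=.
have Sinj : injective (fun pq : X * X => (pq.2, pq.1)) by move=> [a b] [c d] [-> ->].
set I2 := fun pq : X * X => ([&& g pq.1 \in g @: T, g pq.2 \in g @: T,
     lt (g pq.1) (g pq.2) & lt (h (g pq.2)) (h (g pq.1))] : nat).
have -> : (\sum_pq I2 pq = \sum_pq (lt pq.1 pq.2 * (I2 pq + I2 (pq.2, pq.1))))%N.
  rewrite [RHS](eq_bigr (fun pq => lt pq.1 pq.2 * I2 pq + lt pq.1 pq.2 * I2 (pq.2, pq.1)))%N;
    last by move=> pq _; rewrite mulnDr.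
  rewrite big_split /= [X in (_ + X)%N](reindex_inj Sinj) /= -big_split /=.
  apply: eq_bigr => [[p q]] _ /=.
  case: (eqVneq p q) => [->|pq]; first by rewrite /I2 /= !ltirr /= !andbF.  
  rewrite (lttot pq) /I2 /=; case: (lt p q); rewrite /= ?mul1n ?mul0n ?addn0 //.
set I1 := fun pq : X * X => _.
rewrite -big_split /=.
set J := fun pq : X * X => ([&& pq.1 \in T, pq.2 \in T, lt pq.1 pq.2,
   lt (g pq.2) (g pq.1) & ~~ lt (h (g pq.2)) (h (g pq.1))] : nat).
rewrite (eq_bigr (fun pq => (([&& pq.1 \in T, pq.2 \in T, lt pq.1 pq.2 &
   lt ((h \o g) pq.2) ((h \o g) pq.1)] : nat) + 2 * J pq)%N)); last first.
  move=> [p q] _ /=; rewrite /I1 /I2 /J /= !(mem_imset _ _ ginj).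
  case: (eqVneq p q) => [->|pq]; first by rewrite ltirr !andbF.
  have gpq : g p != g q by apply: contra pq => /eqP /ginj ->.
  have hgpq : h (g p) != h (g q) by apply: contra gpq => /eqP /hinj ->.
  rewrite !(lttot gpq) !(lttot hgpq).
  by case: (p \in T); case: (q \in T); case: (lt p q); case: (lt (g p) (g q));
     case: (lt (h (g p)) (h (g q))).
rewrite big_split /= -big_distrr /= oddD oddM /= ?andFb ?addbF.
by [].
Qed.
End Cocycle.

Section Key.
Variables n m' : nat.
Implicit Types p q : 'I_n * 'I_m'.

Lemma key_lt p q : (key p < key q)%N =
  (p.1 < q.1)%N || ((p.1 == q.1) && (p.2 < q.2)%N).
Proof.
rewrite /key -val_eqE /=.
case: p q => [[a Ha] [b Hb]] [[c Hc] [d Hd]] /=.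
case: (ltngtP a c) => H /=.
- apply/idP; nia.
- apply/idP => /=; nia.
- subst; by rewrite ltn_add2l.
Qed.

Definition ltk : rel ('I_n * 'I_m') := fun p q => (key p < key q)%N.

Lemma ltk_irr p : ltk p p = false.
Proof. by rewrite /ltk ltnn. Qed.

Lemma ltk_tot p q : p != q -> ltk q p = ~~ ltk p q.
Proof.
rewrite /ltk !key_lt.
case: p q => [[a Ha] [b Hb]] [[c Hc] [d Hd]] /=.
rewrite xpair_eqE -!val_eqE /= => pq.
case: (ltngtP a c) => H /=.
- by [].
- by [].
- by subst; move: pq; rewrite eqxx /=; case: (ltngtP b d).
Qed.

Definition fs (s : 'S_n) p := (s p.1, p.2).

Lemma fs_inj s : injective (fs s).
Proof. by move=> [a b] [c d] [/perm_inj -> ->]. Qed.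

Lemma theta_signE s T : theta_sign s T = ((-1) ^+ invc ltk (fs s) T)%R.
Proof. by []. Qed.

Lemma invc_ext (g g' : 'I_n * 'I_m' -> 'I_n * 'I_m') T : g =1 g' ->
  invc ltk g T = invc ltk g' T.
Proof. by move=> H; apply: eq_card => pq; rewrite !inE !H. Qed.

Lemma theta_sign_cocycle s t T :
  theta_sign (s * t)%g T = (theta_sign s T * theta_sign t (fs s @: T))%R.
Proof.
rewrite !theta_signE -exprD -[in RHS]signr_odd (invc_cocycle ltk_irr ltk_tot);
  try exact: fs_inj.
rewrite signr_odd; congr (_ ^+ _)%R.
by apply: invc_ext => p; rewrite /fs /= permM.
Qed.

Definition crow (T : {set 'I_n * 'I_m'}) (a : 'I_n) := #|[set p in T | p.1 == a]|.

Lemma invc_blocks s T : invc ltk (fs s) T =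
  (\sum_(a : 'I_n) \sum_(b : 'I_n) (((a < b)%N && (s b < s a)%N) * (crow T a * crow T b)))%N.
Proof.
rewrite /invc card_nat.
have cE a : crow T a = (\sum_p ((p \in T) && (p.1 == a) : nat))%N by rewrite /crow card_nat.
have step (a b : 'I_n) : (((a < b)%N && (s b < s a)%N) * (crow T a * crow T b))%N =
   (\sum_p \sum_q (((a < b)%N && (s b < s a)%N) *
        (((p \in T) && (p.1 == a) : nat) * ((q \in T) && (q.1 == b) : nat))))%N.
  rewrite !cE big_distrl /= big_distrr /=; apply: eq_bigr => p _.
  by rewrite big_distrr /= big_distrr.
under [RHS]eq_bigr do under eq_bigr do rewrite step.
under [RHS]eq_bigr do rewrite exchange_big /=.
rewrite [RHS]exchange_big /=.
under [RHS]eq_bigr do under eq_bigr do rewrite exchange_big /=.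
under [RHS]eq_bigr do rewrite exchange_big /=.
rewrite [RHS]pair_bigA /=; apply: eq_bigr => -[p q] _ /=.
rewrite (bigD1 p.1) //= [X in (_ + X)%N]big1 ?addn0; last first.
  by move=> a /negbTE ap; rewrite big1 // => b _; rewrite eq_sym ap andbF /= ?muln0 ?mul0n.
rewrite (bigD1 q.1) //= [X in (_ + X)%N]big1 ?addn0; last first.
  by move=> b /negbTE bq; rewrite eq_sym bq andbF /= muln0 muln0.
rewrite !eqxx !andbT /ltk !key_lt /fs /= -!val_eqE /=.
case: (p \in T); case: (q \in T); rewrite ?muln0 ?mul0n ?andbF //= ?muln1 ?mul1n.
have sE : (val (s q.1) == val (s p.1)) = (val q.1 == val p.1).
  by rewrite val_eqE (inj_eq perm_inj) val_eqE.
rewrite sE.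
case: (ltngtP p.1 q.1) => H /=.
- by rewrite orbF.
- by [].
- have -> : s q.1 = s p.1 by congr (s _); apply/val_inj. 
  by rewrite ltnn /=; case: (ltngtP p.2 q.2).
Qed.

Lemma invc_even (s : 'S_n) T :
  (forall a b : 'I_n, (a < b)%N -> (s b < s a)%N -> ~~ (odd (crow T a) && odd (crow T b))) ->
  ~~ odd (invc ltk (fs s) T).
Proof.
move=> H; rewrite invc_blocks -dvdn2; apply: dvdn_sum => a _; apply: dvdn_sum => b _.
case E: ((a < b)%N && (s b < s a)%N); last by rewrite mul0n.
move/andP: E => [H1 H2]; rewrite mul1n dvdn2 oddM; exact: H.
Qed.

Lemma theta_sign_even (s : 'S_n) T :
  (forall a b : 'I_n, (a < b)%N -> (s b < s a)%N -> ~~ (odd (crow T a) && odd (crow T b))) ->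
  theta_sign s T = 1%R.
Proof. by move=> H; rewrite theta_signE -signr_odd (negbTE (invc_even H)). Qed.

Lemma invc_tperm_odd (r r' : 'I_n) (T : {set 'I_n * 'I_m'}) : (r < r')%N ->
  (forall i, ((r, i) \in T) = ((r', i) \in T)) -> odd (crow T r) ->
  odd (invc ltk (fs (tperm r r')) T).
Proof.
move=> rr' HT oddr.
have rner : r != r' by rewrite -val_eqE /= (ltn_eqF rr').
set tau := tperm r r'.
have fT p : (fs tau p \in T) = (p \in T).
  case: p => a i; rewrite /fs /=; case: tpermP => [->|->|]; rewrite ?HT //.
have ffs p : fs tau (fs tau p) = p by case: p => a i; rewrite /fs /= tpermK.
have ltfs p : ltk p (fs tau p) = (p.1 == r).
  case: p => a i; rewrite /ltk key_lt /fs /=.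
  case: tpermP => [->|->|H1 H2].
  - by rewrite rr' eqxx.
  - rewrite eq_sym (negbTE rner) andFb orbF.
    by apply/negbTE; rewrite -leqNgt ltnW.
  - by rewrite eqxx !ltnn /=; apply/esym/eqP.
rewrite /invc; set A := [set pq | _].
rewrite (@invol_odd _ (fun pq => (fs tau pq.2, fs tau pq.1)) A); last 2 first.
- move=> [p q]; rewrite !inE /= !fT ffs ffs => /and4P[-> -> H1 H2].
  by rewrite H1 H2.
- by move=> [p q] _ /=; rewrite !ffs.
have -> : [set x in [set pq | [&& pq.1 \in T, pq.2 \in T, ltk pq.1 pq.2
                               & ltk (fs tau pq.2) (fs tau pq.1)]]
          | (fs tau x.2, fs tau x.1) == x] =
          (fun p => (p, fs tau p)) @: [set p in T | p.1 == r].
  apply/setP => -[p q]; rewrite !inE /=; apply/idP/imsetP.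
  - move=> /andP[/and4P[pT qT ltpq _] /eqP [E1 E2]].
    exists p; first by rewrite inE pT -ltfs E2.
    by rewrite E2.
  - move=> [p' ]; rewrite inE => /andP[p'T p'r] [-> ->].
    by rewrite fT p'T ffs ltfs p'r !eqxx.
rewrite card_imset //; move=> x y [].
by [].
Qed.

End Key.

Section Mon.
Variables (n m m' : nat) (alpha : 'I_m -> nat) (beta : 'I_m' -> nat).
Local Notation D := (Dbound alpha).
Local Notation t := (tot alpha beta).
Local Notation M := (mon n m m' D).
Local Notation Pt := (part m m' t).
Implicit Types (mu nu : M) (s : 'S_n).

Lemma mon_actM s s' mu : mon_act s' (mon_act s mu) = mon_act (s * s') mu.
Proof.
rewrite /mon_act /=; congr pair.
  by apply/ffunP => p; rewrite !ffunE invMg permM.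
by rewrite -imset_comp; apply: eq_imset => p; rewrite /= permM.
Qed.

Lemma mon_act1 mu : mon_act 1 mu = mu.
Proof.
case: mu => e T; rewrite /mon_act /=; congr pair.
  by apply/ffunP => p; rewrite !ffunE invg1 perm1; case: p.
by rewrite -[RHS]imset_id; apply: eq_imset => -[a b]; rewrite /= perm1.
Qed.

Lemma mon_act_inj s : injective (@mon_act n m m' D s).
Proof.
apply: (can_inj (g := mon_act s^-1)) => mu.
by rewrite mon_actM mulgV mon_act1.
Qed.

Lemma mem_act s mu r i : ((r, i) \in (mon_act s mu).2) = ((s^-1 r, i) \in mu.2)%g.
Proof.
rewrite /mon_act /=.
have -> : (r, i) = fs s (s^-1 r, i)%g by rewrite /fs /= permKV.
by rewrite (mem_imset _ _ (@fs_inj n m' s)).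
Qed.

Lemma is_deg_act s mu : is_deg alpha beta (mon_act s mu) = is_deg alpha beta mu.
Proof.
rewrite /is_deg; congr andb; apply: eq_forallb => k; congr (_ == _).
  rewrite (reindex_inj (@perm_inj _ s)) /=; apply: eq_bigr => r _.
  by rewrite ffunE /= permK.
rewrite -[RHS](card_preimset _ (@perm_inj _ s^-1)%g); apply: eq_card => r.
by rewrite !inE mem_act.
Qed.

Definition rowp mu (r : 'I_n) : Pt :=
  [ffun a => match a with inl k => inord (mu.1 (r, k)) | inr i => inord ((r, i) \in mu.2) end].

Lemma rowp_act s mu r : rowp (mon_act s mu) r = rowp mu (s^-1 r)%g.
Proof.
by apply/ffunP => -[k|i]; rewrite !ffunE // mem_act.
Qed.

Lemma Dle_t : (D <= t)%N.
Proof. by rewrite /tot leq_addr. Qed.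

Lemma alpha_leD k : (alpha k <= D)%N.
Proof. by rewrite /Dbound (bigD1 k) //= leq_addr. Qed.

Lemma beta_le_t i : (beta i <= t)%N.
Proof. by rewrite /tot; apply: leq_trans (leq_addl _ _); rewrite (bigD1 i) //= leq_addr. Qed.

Lemma is_degP mu : is_deg alpha beta mu ->
  (forall k, \sum_r (mu.1 (r, k) : nat) = alpha k)%N /\
  (forall i, #|[set r | (r, i) \in mu.2]| = beta i).
Proof. by move=> /andP[/forallP H1 /forallP H2]; split=> x; apply/eqP. Qed.

Lemma rowp_val mu r : is_deg alpha beta mu ->
  (forall k, (rowp mu r (inl k) : nat) = mu.1 (r, k)) /\
  (forall i, (rowp mu r (inr i) : nat) = ((r, i) \in mu.2)).
Proof.
move=> /is_degP [H1 H2]; split => [k|i]; rewrite ffunE inordK //.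
  rewrite ltnS (leq_trans _ Dle_t) // (leq_trans _ (alpha_leD k)) // -H1.
  by rewrite (bigD1 r) //= leq_addr.
case E: ((r, i) \in mu.2) => //=; rewrite ltnS (leq_trans _ (beta_le_t i)) // -H2.
by rewrite card_gt0; apply/set0Pn; exists r; rewrite inE.
Qed.

Lemma rowp_inj mu nu : is_deg alpha beta mu -> is_deg alpha beta nu ->
  rowp mu =1 rowp nu -> mu = nu.
Proof.
move=> dm dn H; case: mu nu dm dn H => [e T] [e' T'] dm dn H.
have Hm1 r := (rowp_val r dm).1. have Hm2 r := (rowp_val r dm).2.
have Hn1 r := (rowp_val r dn).1. have Hn2 r := (rowp_val r dn).2.
congr pair.
  apply/ffunP => -[r k]; apply/val_inj.
  by have := Hm1 r k; rewrite H Hn1 /= => ->.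
apply/setP => -[r i].
by have := Hm2 r i; rewrite H Hn2 /=; case: ((r, i) \in T); case: ((r, i) \in T').
Qed.

Lemma card_sum (X : finType) (P : pred X) :
  #|[set x | P x]| = (\sum_x (P x : nat))%N.
Proof. exact: card_nat. Qed.

Definition nonempty (p : Pt) := [exists a, (0 < p a)%N].
Definition p0 : Pt := [ffun _ => ord0].

Lemma nonemptyE p : nonempty p = (p != p0).
Proof.
apply/idP/idP => [/existsP [a pa]|pn].
  by apply: contraTneq pa => ->; rewrite ffunE.
apply: contraNT pn => /existsPn H; apply/eqP/ffunP => a.
by rewrite ffunE; apply/val_inj => /=; move: (H a); rewrite lt0n negbK => /eqP.
Qed.

Lemma empty_val p a : ~~ nonempty p -> (p a : nat) = 0.
Proof. by move=> /existsPn /(_ a); rewrite lt0n negbK => /eqP. Qed.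

Definition fib mu p := #|[set r | rowp mu r == p]|.

Definition Phi mu : {ffun Pt -> 'I_t.+1} :=
  [ffun p => inord (if nonempty p then fib mu p else 0)].

Lemma fib_act s mu p : fib (mon_act s mu) p = fib mu p.
Proof.
rewrite /fib -[RHS](card_preimset _ (@perm_inj _ s^-1)%g); apply: eq_card => r.
by rewrite !inE rowp_act.
Qed.

Lemma Phi_act s mu : Phi (mon_act s mu) = Phi mu.
Proof. by apply/ffunP => p; rewrite !ffunE fib_act. Qed.

Lemma fiber_sum (f : 'I_n -> Pt) (g : Pt -> nat) :
  (\sum_r g (f r) = \sum_p #|[set r | f r == p]| * g p)%N.
Proof.
rewrite (partition_big f xpredT) //=; apply: eq_bigr => p _.
rewrite (eq_bigr (fun _ => g p)); last by move=> r /eqP ->.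
by rewrite sum_nat_const cardsE.
Qed.

Lemma row_sum mu a : is_deg alpha beta mu ->
  (\sum_r (rowp mu r a : nat))%N = content alpha beta a.
Proof.
move=> dm; have [H1 H2] := is_degP dm.
case: a => [k|i] /=.
  by rewrite -H1; apply: eq_bigr => r _; rewrite (rowp_val r dm).1.
by rewrite -H2 card_sum; apply: eq_bigr => r _; rewrite (rowp_val r dm).2.
Qed.

Lemma content_le a : (content alpha beta a <= t)%N.
Proof.
case: a => [k|i] /=; last exact: beta_le_t.
exact: leq_trans (alpha_leD k) Dle_t.
Qed.

Lemma fib_le mu p : is_deg alpha beta mu -> nonempty p -> (fib mu p <= t)%N.
Proof.
move=> dm /existsP [a pa]; apply: leq_trans (content_le a); rewrite -(row_sum a dm).
rewrite /fib card_sum; apply: leq_sum => r _.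
by case: eqP => //= ->.
Qed.

Lemma Phi_val mu p : is_deg alpha beta mu ->
  (Phi mu p : nat) = if nonempty p then fib mu p else 0.
Proof.
move=> dm; rewrite ffunE inordK //; case: ifP => // pn.
by rewrite ltnS fib_le.
Qed.

Definition msp4 (P : {ffun Pt -> 'I_t.+1}) :=
  [&& [forall p, (P p > 0)%N ==> [exists a, (p a > 0)%N]],
      [forall a, (\sum_p (P p : nat) * (p a : nat))%N == content alpha beta a],
      ((\sum_p (P p : nat))%N <= n)%N &
      [forall p, (P p > 0)%N ==> [forall i : 'I_m', (p (inr i) <= 1)%N]]].

Definition cond5 (P : {ffun Pt -> 'I_t.+1}) :=
  [forall p, odd (nbarred p) ==> ((P p : nat) <= 1)%N].

Lemma mspE P : is_super_msp n P = msp4 P && cond5 P.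
Proof. by rewrite /is_super_msp /msp4 /cond5 !andbA. Qed.

Lemma Phi_msp4 mu : is_deg alpha beta mu -> msp4 (Phi mu).
Proof.
move=> dm; apply/and4P; split.
- apply/forallP => p; apply/implyP; rewrite Phi_val //.
  by case: ifP.
- apply/forallP => a; apply/eqP; rewrite -(row_sum a dm).
  rewrite (fiber_sum (rowp mu) (fun p => p a : nat)); apply: eq_bigr => p _.
  rewrite Phi_val //; case: ifP => // pn.
  by rewrite empty_val ?pn // !muln0.
- apply: leq_trans (_ : \sum_(r < n) 1 <= n)%N; last by rewrite sum1_card card_ord.
  apply: leq_trans (_ : \sum_r (nonempty (rowp mu r) : nat) <= _)%N; last first.
    by apply: leq_sum => r _; case: nonempty.
  rewrite (fiber_sum (rowp mu) (fun p => nonempty p : nat)) leq_eqVlt; apply/orP; left.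
  apply/eqP; apply: eq_bigr => p _; rewrite Phi_val //.
  by case: ifP; rewrite ?muln1 ?muln0.
- apply/forallP => p; apply/implyP; rewrite Phi_val //.
  case: ifP => // _; rewrite /fib card_gt0 => /set0Pn [r]; rewrite inE => /eqP <-.
  apply/forallP => i; rewrite (rowp_val r dm).2; by case: (_ \in _).
Qed.

Definition seqP (P : {ffun Pt -> 'I_t.+1}) : seq Pt :=
  flatten [seq nseq (P p) p | p <- enum Pt].

Lemma seqP_sum P (F : Pt -> nat) :
  (\sum_(x <- seqP P) F x = \sum_p P p * F p)%N.
Proof.
rewrite /seqP big_flatten /= big_map big_enum /=; apply: eq_bigr => p _.
by rewrite big_nseq iter_addn_0 mulnC.
Qed.

Lemma mem_seqP P x : x \in seqP P -> (0 < P x)%N.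
Proof.
by move=> /flattenP [s' /mapP [p _ ->] /nseqP [-> ]].
Qed.

Lemma size_seqP P : size (seqP P) = (\sum_p (P p : nat))%N.
Proof. by rewrite -sum1_size seqP_sum; apply: eq_bigr => p _; rewrite muln1. Qed.

Lemma nth_sum P (F : Pt -> nat) : F p0 = 0%N -> (size (seqP P) <= n)%N ->
  (\sum_(r < n) F (nth p0 (seqP P) r) = \sum_(x <- seqP P) F x)%N.
Proof.
move=> F0 sz; rewrite (big_nth p0) -(big_mkord xpredT (fun r => F (nth p0 (seqP P) r))).
rewrite (big_cat_nat _ (n := size (seqP P))) //= [X in (_ + X)%N]big1_seq ?addn0 //.
move=> i /andP[_]; rewrite mem_index_iota => /andP[Hi _].
by rewrite nth_default.
Qed.

Lemma msp4P P : msp4 P ->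
  [/\ forall p, (0 < P p)%N -> nonempty p,
      forall a, (\sum_p (P p : nat) * (p a : nat))%N = content alpha beta a,
      ((\sum_p (P p : nat))%N <= n)%N &
      forall p, (0 < P p)%N -> forall i, (p (inr i) <= 1)%N].
Proof.
move=> /and4P[/forallP H1 /forallP H2 H3 /forallP H4]; split => //.
- by move=> p; move/implyP: (H1 p).
- by move=> a; apply/eqP.
- by move=> p /(implyP (H4 p)) /forallP.
Qed.

Lemma part_le P p a : msp4 P -> (0 < P p)%N -> (p a <= content alpha beta a)%N.
Proof.
move=> /msp4P [_ H2 _ _] Pp; rewrite -H2 (bigD1 p) //=.
apply: leq_trans (leq_addr _ _); by rewrite leq_pmull.
Qed.

Definition Psi (P : {ffun Pt -> 'I_t.+1}) : M :=
  ([ffun x : 'I_n * 'I_m => inord (nth p0 (seqP P) x.1 (inl x.2))],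
   [set x : 'I_n * 'I_m' | (0 < nth p0 (seqP P) x.1 (inr x.2))%N]).

Lemma nth_seqP P r : nth p0 (seqP P) r = p0 \/ (0 < P (nth p0 (seqP P) r))%N.
Proof.
case: (ltnP r (size (seqP P))) => H; last by left; rewrite nth_default.
by right; apply: mem_seqP; rewrite mem_nth.
Qed.

Lemma nth_le P r a : msp4 P -> (nth p0 (seqP P) r a <= content alpha beta a)%N.
Proof.
move=> H; case: (nth_seqP P r) => [->|Hp]; first by rewrite ffunE.
exact: (part_le a H Hp).
Qed.

Lemma nth_le1 P r i : msp4 P -> (nth p0 (seqP P) r (inr i) <= 1)%N.
Proof.
move=> H; case: (nth_seqP P r) => [->|Hp]; first by rewrite ffunE.
by have [_ _ _ H4] := msp4P H; apply: H4.
Qed.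

Lemma Psi_deg P : msp4 P -> is_deg alpha beta (Psi P).
Proof.
move=> H; have [H1 H2 H3 H4] := msp4P H.
have sz : (size (seqP P) <= n)%N by rewrite size_seqP.
apply/andP; split; [apply/forallP => k | apply/forallP => i]; apply/eqP.
- rewrite /Psi /=.
  rewrite (eq_bigr (fun r : 'I_n => nth p0 (seqP P) r (inl k) : nat)); last first.
    move=> r _; rewrite ffunE inordK // ltnS.
    exact: (leq_trans (nth_le r (inl k) H) (alpha_leD k)).
  by rewrite (@nth_sum P (fun p => p (inl k) : nat)) ?ffunE // seqP_sum H2.
- rewrite card_sum /Psi /=.
  rewrite (eq_bigr (fun r : 'I_n => nth p0 (seqP P) r (inr i) : nat)); last first.
    move=> r _; rewrite inE /=; have := nth_le1 r i H.
    by case: (nth p0 (seqP P) r (inr i)) => [[|[|x]] Hx].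
  by rewrite (@nth_sum P (fun p => p (inr i) : nat)) ?ffunE // seqP_sum H2.
Qed.

Lemma rowp_Psi P r : msp4 P -> rowp (Psi P) r = nth p0 (seqP P) r.
Proof.
move=> H; apply/ffunP => -[k|i]; rewrite ffunE /Psi /=.
  rewrite ffunE inordK ?inord_val // ltnS.
  exact: (leq_trans (nth_le r (inl k) H) (alpha_leD k)).
rewrite inE /=; apply/val_inj; rewrite /= inordK; last first.
  by case: (nth p0 (seqP P) r (inr i)) => [[|x] Hx] //=; apply: leq_trans Hx.
by have := nth_le1 r i H; case: (nth p0 (seqP P) r (inr i)) => [[|[|x]] Hx].
Qed.

Lemma Phi_Psi P : msp4 P -> Phi (Psi P) = P.
Proof.
move=> H; have [H1 H2 H3 H4] := msp4P H.
have sz : (size (seqP P) <= n)%N by rewrite size_seqP.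
apply/ffunP => p; apply/val_inj; rewrite /= Phi_val ?Psi_deg //.
case: ifP => pn; last first.
  by case: (posnP (P p)) => // /H1; rewrite pn.
rewrite /fib card_sum.
rewrite (eq_bigr (fun r : 'I_n => (nth p0 (seqP P) r == p) : nat)); last first.
  by move=> r _; rewrite rowp_Psi.
rewrite (@nth_sum P (fun x => (x == p) : nat)); last by [].
  rewrite seqP_sum (bigD1 p) //= eqxx muln1 big1 ?addn0 // => q /negbTE qp.
  by rewrite qp muln0.
by move: pn; rewrite eq_sym nonemptyE => /negbTE ->.
Qed.

Lemma count_tuple (f : 'I_n -> Pt) p :
  count_mem p [seq f i | i <- enum 'I_n] = #|[set r | f r == p]|.
Proof.
rewrite -sum1_count big_map big_enum_cond card_sum big_mkcond /=; apply: eq_bigr => r _.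
by case: (_ == _).
Qed.

Lemma fib_sum mu : (\sum_p fib mu p = n)%N.
Proof.
have := fiber_sum (rowp mu) (fun _ => 1%N).
by rewrite sum1_card card_ord => ->; apply: eq_bigr => p _; rewrite muln1.
Qed.

Lemma Phi_orbit mu nu : is_deg alpha beta mu -> is_deg alpha beta nu ->
  Phi mu = Phi nu -> exists s, nu = mon_act s mu.
Proof.
move=> dm dn E.
have Hf p : p != p0 -> fib mu p = fib nu p.
  move=> pn; have := congr1 (fun P : {ffun Pt -> 'I_t.+1} => (P p : nat)) E; rewrite /= !Phi_val //.
  by rewrite nonemptyE pn.
have Hf0 : fib mu p0 = fib nu p0.
  have := fib_sum mu; rewrite -(fib_sum nu) (bigD1 p0) //= [in RHS](bigD1 p0) //=.
  rewrite (eq_bigr (fun p => fib nu p)); last by move=> p /Hf.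
  by move/eqP; rewrite eqn_add2r => /eqP.
have Hp : perm_eq (mktuple (rowp mu)) (mktuple (rowp nu)).
  apply/allP => p _ /=; rewrite !count_tuple; apply/eqP.
  by case: (eqVneq p p0) => [->|/Hf].
case/tuple_permP: Hp => s Hs.
have Hr r : rowp mu r = rowp nu (s r).
  have := congr1 (fun x : seq Pt => nth p0 x r) Hs => /=.
  rewrite (nth_map r) ?size_enum_ord // -?enumT ?nth_ord_enum.
  rewrite (nth_map r) ?size_enum_ord // -?enumT ?nth_ord_enum tnth_mktuple.
  by [].

exists s; apply: rowp_inj => //; first by rewrite is_deg_act.
by move=> r; rewrite rowp_act Hr permKV.
Qed.

Lemma stab_rows s mu : mon_act s mu = mu -> forall r, rowp mu (s r) = rowp mu r.
Proof. by move=> E r; have := rowp_act s mu (s r); rewrite E permK. Qed.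

Lemma nbarred_row mu r : is_deg alpha beta mu -> nbarred (rowp mu r) = crow mu.2 r.
Proof.
move=> dm; rewrite /nbarred /crow.
rewrite (eq_bigr (fun i => ((r, i) \in mu.2) : nat)); last by move=> i _; rewrite (rowp_val r dm).2.
rewrite -card_sum.
have -> : [set p in mu.2 | p.1 == r] = (pair r) @: [set i | (r, i) \in mu.2].
  apply/setP => -[a i]; rewrite !inE /=; apply/andP/imsetP => [[H /eqP E]|[j]].
    by exists i; rewrite ?inE -?E.
  by rewrite inE => H [-> ->].
by rewrite card_imset //; move=> x y [].
Qed.

Lemma odd_nonempty p : odd (nbarred p) -> nonempty p.
Proof.
apply: contraTT => /existsPn H; rewrite /nbarred big1 // => i _.
by apply/eqP; rewrite -leqn0 leqNgt H.
Qed.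

Lemma good_stab s mu : is_deg alpha beta mu -> cond5 (Phi mu) ->
  mon_act s mu = mu -> theta_sign s mu.2 = 1%R.
Proof.
move=> dm c5 E; apply: theta_sign_even => a b ab sba.
have fixodd x : odd (crow mu.2 x) -> s x = x.
  move=> ox; apply/eqP; apply/negPn/negP => sx.
  have Hn : odd (nbarred (rowp mu x)) by rewrite nbarred_row.
  have := implyP (forallP c5 (rowp mu x)) Hn.
  rewrite Phi_val // (odd_nonempty Hn) leqNgt; apply/negP/negPn.
  apply/card_gt1P; exists x, (s x); rewrite !inE stab_rows // eqxx; split => //.
  by rewrite eq_sym.
apply/negP => /andP [oa ob]; move: sba; rewrite (fixodd a oa) (fixodd b ob).
by rewrite ltnNge (ltnW ab).
Qed.

Lemma bad_stab mu : is_deg alpha beta mu -> ~~ cond5 (Phi mu) ->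
  exists s, mon_act s mu = mu /\ theta_sign s mu.2 = (-1)%R.
Proof.
move=> dm /forallPn [p]; rewrite negb_imply => /andP [op Pp].
have pn := odd_nonempty op.
rewrite Phi_val // pn -ltnNge in Pp.
case/card_gt1P: Pp => x [y [xin yin xy]]; rewrite !inE in xin yin.
have [r [r' [rr' rp r'p]]] : exists r r' : 'I_n, [/\ (r < r')%N, rowp mu r = p & rowp mu r' = p].
  case: (ltngtP x y) => H.
  - by exists x, y; split => //; apply/eqP.
  - by exists y, x; split => //; apply/eqP.
  - by move: xy; rewrite -val_eqE /= H eqxx.
exists (tperm r r'); split.
  apply: rowp_inj; rewrite ?is_deg_act // => z; rewrite rowp_act tpermV.
  by case: tpermP => [->|->|] //; rewrite rp r'p.
rewrite theta_signE -signr_odd invc_tperm_odd ?expr1 //.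
  move=> i; have := (rowp_val r dm).2 i; have := (rowp_val r' dm).2 i.
  rewrite rp r'p => ->; by case: (_ \in _); case: (_ \in _).
by rewrite -nbarred_row // rp.
Qed.

End Mon.

Section Lin.
Variables (n m m' : nat) (alpha : 'I_m -> nat) (beta : 'I_m' -> nat).
Local Notation D := (Dbound alpha).
Local Notation t := (tot alpha beta).
Local Notation M := (mon n m m' D).
Local Notation Pt := (part m m' t).
Local Notation N := #|{: M}|.
Local Notation A s := (act_mx m m' D s).
Local Open Scope ring_scope.
Implicit Types (mu nu : M) (s : 'S_n).

Lemma actE s (i j : 'I_N) : A s i j =
  if enum_val j == mon_act s (enum_val i) then theta_sign s (enum_val i).2 else 0.
Proof. by rewrite mxE. Qed.

Lemma actM s s' : A s *m A s' = A (s * s')%g.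
Proof.
apply/matrixP => i j; rewrite !mxE.
rewrite (bigD1 (enum_rank (mon_act s (enum_val i)))) //= big1 ?addr0; last first.
  move=> k kn; rewrite actE; case: eqP => [E|]; last by rewrite mul0r.
  by move: kn; rewrite -E (@enum_valK (mon n m m' D)) eqxx.
rewrite !actE (@enum_rankK (mon n m m' D)) eqxx mon_actM theta_sign_cocycle.
by case: eqP => _; rewrite ?mulr0.
Qed.

Lemma inv_coord (u : 'rV[algC]_N) s mu : u *m A s = u ->
  u 0 (enum_rank (mon_act s mu)) = theta_sign s mu.2 * u 0 (enum_rank mu).
Proof.
move=> H; rewrite -{1}H mxE (bigD1 (enum_rank mu)) //= big1 ?addr0; last first.
  move=> i ni; rewrite actE (@enum_rankK (mon n m m' D)); case: eqP => [/mon_act_inj E|]; last by rewrite mulr0.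
  by move: ni; rewrite E (@enum_valK (mon n m m' D)) eqxx.
by rewrite actE !(@enum_rankK (mon n m m' D)) eqxx mulrC.
Qed.

Definition Wm : 'M[algC]_N := (deg_mx n alpha beta
         :&: \bigcap_(s : 'S_n) kermx (act_mx m m' (Dbound alpha) s - 1%:M))%MS.
Local Notation W := Wm.

Lemma memW (u : 'rV[algC]_N) : (u <= W)%MS = (u <= deg_mx n alpha beta)%MS &&
   [forall s, u *m A s == u].
Proof.
rewrite /Wm sub_capmx; congr andb; apply/sub_bigcapmxP/forallP => H s.
  by move: (H s isT); rewrite sub_kermx mulmxBr mulmx1 subr_eq0.
by move=> _; rewrite sub_kermx mulmxBr mulmx1 subr_eq0; apply: H.
Qed.

Lemma deg_coord (u : 'rV_N) j : (u <= deg_mx n alpha beta)%MS ->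
  ~~ is_deg alpha beta (enum_val j) -> u 0 j = 0.
Proof.
move=> /submxP [X ->] nd; rewrite mxE big1 // => i _; rewrite mxE.
by case: eqP => [->|]; rewrite ?(negbTE nd) /= ?mulr0.
Qed.

Lemma deg_intro (u : 'rV_N) :
  (forall j, ~~ is_deg alpha beta (enum_val j) -> u 0 j = 0) ->
  (u <= deg_mx n alpha beta)%MS.
Proof.
move=> H; suff -> : u = u *m deg_mx n alpha beta by apply: submxMl.
apply/rowP => j; rewrite !mxE (bigD1 j) //= big1 ?addr0; last first.
  by move=> i ij; rewrite mxE (negbTE ij) mulr0.
rewrite mxE eqxx /=; case E: (is_deg _ _ _); first by rewrite mulr1.
by rewrite mulr0 H ?E.
Qed.

Definition wv mu : 'rV_N := \sum_s row (enum_rank mu) (A s).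

Lemma wv_coord mu j : wv mu 0 j =
  \sum_s (if enum_val j == mon_act s mu then theta_sign s mu.2 else 0).
Proof. by rewrite summxE; apply: eq_bigr => s _; rewrite mxE actE (@enum_rankK (mon n m m' D)). Qed.

Lemma wv_inv mu s : wv mu *m A s = wv mu.
Proof.
rewrite /wv mulmx_suml [RHS](reindex_inj (mulIg s)) /=.
by apply: eq_bigr => s' _; rewrite -row_mul actM.
Qed.

Lemma wv_W mu : is_deg alpha beta mu -> (wv mu <= W)%MS.
Proof.
move=> dm; rewrite memW; apply/andP; split.
  apply: deg_intro => j nd; rewrite wv_coord big1 // => s _.
  by case: eqP => // E; move: nd; rewrite E is_deg_act dm.
by apply/forallP => s; rewrite wv_inv.
Qed.

Lemma wv_other mu nu : Phi beta nu != Phi beta mu -> wv mu 0 (enum_rank nu) = 0.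
Proof.
move=> H; rewrite wv_coord big1 // => s _; rewrite (@enum_rankK (mon n m m' D)).
case: eqP => [E|_]; last by [].
by move: H; rewrite E Phi_act eqxx.
Qed.

Lemma wv_self mu : is_deg alpha beta mu -> cond5 (Phi beta mu) ->
  wv mu 0 (enum_rank mu) != 0.
Proof.
move=> dm c5; rewrite wv_coord (@enum_rankK (mon n m m' D)).
rewrite (eq_bigr (fun s => ((mu == mon_act s mu) : nat)%:R)); last first.
  move=> s _; case: eqP => [E|_]; last by [].
  by rewrite (good_stab dm c5 (esym E)).
rewrite -natr_sum pnatr_eq0 -lt0n (bigD1 1%g) // mon_act1 eqxx.
by [].
Qed.

End Lin.

Section Main.
Variables (n m m' : nat) (alpha : 'I_m -> nat) (beta : 'I_m' -> nat).
Local Notation D := (Dbound alpha).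
Local Notation t := (tot alpha beta).
Local Notation M := (mon n m m' D).
Local Notation Pt := (part m m' t).
Local Notation N := #|{: M}|.
Local Notation A s := (act_mx m m' D s).
Local Open Scope ring_scope.

Definition Gs := [set P : {ffun Pt -> 'I_t.+1} | is_super_msp n P].
Local Notation k := #|Gs|.
Definition muj (j : 'I_k) : M := Psi n (enum_val j).
Definition rk (j : 'I_k) : 'I_N := enum_rank (muj j).

Lemma muj_deg j : is_deg alpha beta (muj j).
Proof.
have := enum_valP j; rewrite inE mspE => /andP[H _]; exact: Psi_deg.
Qed.

Lemma Phi_muj j : Phi beta (muj j) = enum_val j.
Proof.
have := enum_valP j; rewrite inE mspE => /andP[H _]; exact: Phi_Psi.
Qed.

Lemma cond5_muj j : cond5 (Phi beta (muj j)).
Proof.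
by have := enum_valP j; rewrite inE mspE Phi_muj => /andP[_ H].
Qed.

Definition Cm : 'M[algC]_(N, k) := \matrix_(c, j) (c == rk j)%:R.
Definition Mw : 'M[algC]_(k, N) := \matrix_(j, c) wv (muj j) 0 c.

Lemma MwC : Mw *m Cm = diag_mx (\row_j wv (muj j) 0 (rk j)).
Proof.
apply/matrixP => j j'; rewrite !mxE (bigD1 (rk j')) //= big1 ?addr0; last first.
  by move=> c /negbTE cn; rewrite !mxE cn mulr0.
rewrite !mxE; have -> : (rk j' == rk j') = true by apply/eqP.
rewrite mulr1.
case: (eqVneq j j') => [<-|jj]; first by rewrite mulr1n.
rewrite mulr0n /rk (@wv_other _ _ _ alpha beta) //.
by rewrite !Phi_muj; apply: contra jj => /eqP /enum_val_inj ->.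
Qed.

Lemma rank_Mw : \rank Mw = k.
Proof.
apply/eqP; rewrite eqn_leq rank_leq_row /=.
apply: leq_trans (mxrankM_maxl Mw Cm).
rewrite MwC mxrank_unit // unitmxE det_diag unitfE.
apply/prodf_neq0 => j _; rewrite mxE.
exact: (wv_self (muj_deg j) (cond5_muj j)).
Qed.

Lemma Mw_W : (Mw <= Wm n alpha beta)%MS.
Proof.
apply/row_subP => j.
have -> : row j Mw = wv (muj j) by apply/rowP => c; rewrite !mxE.
exact: wv_W (muj_deg j).
Qed.

Lemma zero_vec (u : 'rV[algC]_N) : (u <= Wm n alpha beta)%MS -> u *m Cm = 0 -> u = 0.
Proof.
rewrite memW => /andP [ud /forallP ui] uC.
have uC0 j : u 0 (rk j) = 0.
  have := congr1 (fun v : 'rV_k => v 0 j) uC; rewrite !mxE => <-.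
  rewrite (bigD1 (rk j)) //= big1 ?addr0; last by move=> c /negbTE cn; rewrite mxE cn mulr0.
  by rewrite mxE eqxx mulr1.
apply/rowP => c; rewrite mxE.
case dm: (is_deg alpha beta (enum_val c)); last by rewrite (@deg_coord _ _ _ alpha beta) ?dm.
case c5: (cond5 (Phi beta (enum_val c))).
  have PG : Phi beta (enum_val c) \in Gs by rewrite inE mspE Phi_msp4.
  set j := enum_rank_in PG (Phi beta (enum_val c)).
  have Ej : enum_val j = Phi beta (enum_val c) by rewrite enum_rankK_in.
  have [s Es] : exists s, enum_val c = mon_act s (muj j).
    apply: Phi_orbit; [exact: muj_deg | exact: dm | by rewrite Phi_muj Ej].
  have := inv_coord (muj j) (eqP (ui s)); rewrite -Es (@enum_valK (mon n m m' D)).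
  by move=> ->; rewrite -/(rk j) uC0 mulr0.
have [s [Es Esgn]] := bad_stab dm (negbT c5).
have := inv_coord (enum_val c) (eqP (ui s)); rewrite Es Esgn (@enum_valK (mon n m m' D)).
move=> /eqP; rewrite mulN1r -addr_eq0 -mulr2n mulrn_eq0 /= => /eqP.
by [].
Qed.

Lemma inv_dimE : inv_dim n alpha beta = k.
Proof.
rewrite /inv_dim -/(Wm n alpha beta).
apply/eqP; rewrite eqn_leq; apply/andP; split; last first.
  by rewrite -{1}rank_Mw; apply: mxrankS Mw_W.
rewrite -(mxrank_mul_ker (Wm n alpha beta) Cm).
have -> : \rank (Wm n alpha beta :&: kermx Cm)%MS = 0%N.
  apply/eqP; rewrite mxrank_eq0; apply/eqP/row_matrixP => i; rewrite row0.
  apply: zero_vec.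
    exact: submx_trans (row_sub i _) (capmxSl _ _).
  apply/eqP; rewrite -sub_kermx.
  exact: submx_trans (row_sub i _) (capmxSr _ _).
by rewrite addn0 rank_leq_col.
Qed.

End Main.

Theorem corollary4p1 (n m m' : nat) (alpha : 'I_m -> nat) (beta : 'I_m' -> nat) :
  (0 < n)%N -> inv_dim n alpha beta = num_super_msp n alpha beta.
Proof.
move=> _; rewrite inv_dimE /num_super_msp; apply: eq_card => P.
by rewrite inE.
Qed.
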